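(* Fix an arbitrary execution of Algorithm $\mathrm{tree}(G)$ on $G$, and let $r$ be the rank defined in the context. Then every vertex $u$ of $G$ has at most one neighbor $v$ in $G$ with $r(u)<r(v)$.
   Context: $G$ is a finite connected simple undirected graph containing a vertex $a$ with $d_G(a)\ge 2$. For a subtree $T$ of $G$ and a vertex $u$ of $T$: - $V_T(u)$ is the set of vertices $v\in V(G)\setminus V(T)$ with $uv\in E(G)$. - $E_T(u)$ is the set of edges $uv$ of $G$ with $v\in V_T(u)$. - If $|V_T(u)|=1$, then $v_T(u)$ denotes the unique vertex of $V_T(u)$. Three sets of vertices of $T$ are defined: - $W_2(T)=\{u\in V(T): |V_T(u)|\ge 2\}$. - $W_1(T)=\{u\in V(T): |V_T(u)|=1,\ |V_{T\cup E_T(u)}(v_T(u))|\ge 2\}$. - $W_0(T)=\{u\in V(T): |V_T(u)|=1,\ |V_{T\cup E_T(u)}(v_T(u))|\le 1\}$. Algorithm $\mathrm{tree}(G)$ runs as follows. 1. Start with $T=\{a\}$. 2. While $V(T)\ne V(G)$: - If $W_2(T)\ne\emptyset$, pick an arbitrary $u\in W_2(T)$. - Else, if $W_1(T)\neq\emptyset$, pick an arbitrary $u\in W_1(T)$. - Else, let $u$ be the vertex of $W_0(T)$ that joined $V(T)$ most recently. - Set $T:=T\cup E_T(u)$ (''expand $T$ at $u$''). 3. Return $T$. Now fix an execution and let $T$ be the returned spanning tree, rooted at $a$. For $v\ne a$, let $p(v)$ be the parent of $v$ in $T$. For each vertex $u$ with $d_T(u)\ge 2$, let $T_u$ be the tree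 just before the (unique) expansion at $u$. The rank $r:V(G)\to\mathbb{Z}$ is defined by $r(a)=1$ and, for each edge $uv$ of $T$ with $u=p(v)$: - $r(v)=r(u)$ if $u\in W_2(T_u)$; - $r(v)=1+\max_{w\in V(T_u)} r(w)$ otherwise. *)

(* Defs.v *)
From mathcomp Require Import all_boot.
Set Implicit Arguments. Unset Strict Implicit. Unset Printing Implicit Defensive.

Section TreeAlgo.
Variables (T : finType) (e : rel T).

Definition outN (S : {set T}) (u : T) : {set T} := [set v | e u v & v \notin S].

Definition expand (S : {set T}) (u : T) : {set T} := S :|: outN S u.

Definition W2 (S : {set T}) : {set T} := [set u in S | 2 <= #|outN S u|].
Definition W1 (S : {set T}) : {set T} :=
  [set u in S | [exists v, (outN S u == [set v]) && (2 <= #|outN (v |: S) v|)]].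
Definition W0 (S : {set T}) : {set T} :=
  [set u in S | [exists v, (outN S u == [set v]) && (#|outN (v |: S) v| <= 1)]].

Variable a : T.

(* An execution is recorded by the sequence us of vertices at which the tree
   is expanded.  state us i = vertex set of the tree before the i-th step. *)
Definition state (us : seq T) (i : nat) : {set T} :=
  foldl expand [set a] (take i us).

(* the step index at which v joined the tree (0 for a) *)
Definition jointime (us : seq T) (v : T) : nat :=
  find (fun j => v \in state us j) (iota 0 (size us).+1).

Definition valid_step (us : seq T) (i : nat) : Prop :=
  let S := state us i in
  let u := nth a us i in
  S != setT /\
  (W2 S != set0 -> u \in W2 S) /\
  (W2 S = set0 -> W1 S != set0 -> u \in W1 S) /\
  (W2 S = set0 -> W1 S = set0 ->
     u \in W0 S /\ (forall w, w \in W0 S -> jointime us w <= jointime us u)).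

Definition execution (us : seq T) : Prop :=
  (forall i, i < size us -> valid_step us i) /\ state us (size us) = setT.

Definition is_rank (us : seq T) (r : T -> nat) : Prop :=
  r a = 1 /\
  forall i, i < size us -> forall v, v \in outN (state us i) (nth a us i) ->
    r v = (if nth a us i \in W2 (state us i) then r (nth a us i)
           else (\max_(w in state us i) r w).+1).

End TreeAlgo.

(* Main.v *)
Require Import Defs.
From mathcomp Require Import all_boot.
Set Implicit Arguments. Unset Strict Implicit.

Section Pf.
Variables (T : finType) (e : rel T) (a : T) (us : seq T) (r : T -> nat).
Local Notation S i := (state e a us i).
Local Notation x i := (nth a us i).

Lemma stateS i : S i.+1 = if i < size us then expand e (S i) (x i) else S i.
Proof.
rewrite /state; case: ltnP => h.
- by rewrite (take_nth a h) foldl_rcons.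
- by rewrite !take_oversize // (leq_trans h).
Qed.

Lemma state_sub i : S i \subset S i.+1.
Proof. rewrite stateS; case: ifP => _ //; exact: subsetUl. Qed.

Lemma state_mono i k : i <= k -> S i \subset S k.
Proof.
elim: k => [|k IH]; first by rewrite leqn0 => /eqP->.
rewrite leq_eqVlt => /orP[/eqP->//| h].
exact: subset_trans (IH h) (state_sub k).
Qed.

Lemma state0 : S 0 = [set a].
Proof. by rewrite /state take0. Qed.

Lemma a_in i : a \in S i.
Proof. have := subsetP ((state_mono (leq0n i))) a; rewrite state0 inE eqxx; exact. Qed.

Lemma outN_sub (A B : {set T}) u : A \subset B -> outN e B u \subset outN e A u.
Proof.
move=> h; apply/subsetP => v; rewrite !inE => /andP[-> nv] /=.
apply: contra nv; exact: (subsetP h).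
Qed.

Lemma W2_mono (A B : {set T}) y : A \subset B -> y \in A -> y \in W2 e B -> y \in W2 e A.
Proof.
rewrite !inE => h yS /andP[_ c]; rewrite yS /=.
exact: leq_trans c (subset_leq_card (outN_sub y h)).
Qed.

Lemma maxge (A : {set T}) w : w \in A -> r w <= \max_(w0 in A) r w0.
Proof. move=> h; exact: (@leq_bigmax_cond _ (fun w0 => w0 \in A) r w h). Qed.

Hypothesis exec : execution e a us.
Hypothesis hr : is_rank e a us r.

Lemma x_W2 i : i < size us -> W2 e (S i) != set0 -> x i \in W2 e (S i).
Proof. move=> h; case: (exec) => hv _; case: (hv i h) => _ [h2 _]; exact: h2. Qed.

Definition Inv i := forall y w, y \in W2 e (S i) -> w \in S i -> r w <= r y.

Lemma inv_all i : i <= size us -> Inv i.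
Proof.
elim: i => [|i IH] Hi.
- move=> y w; rewrite state0 !inE => /andP[/eqP-> _] /eqP-> //.
- have Hi' : i < size us := Hi.
  have IHi := IH (ltnW Hi).
  have Hnew := (proj2 hr) i Hi'.
  rewrite /Inv stateS Hi' /expand.
  move=> y w yW wS.
  case: (boolP (W2 e (S i) == set0)) => hW.
  + have xn : x i \notin W2 e (S i) by rewrite (eqP hW) inE.
    have yn : y \notin S i.
      apply/negP => yS.
      have : y \in W2 e (S i) by apply: W2_mono yS yW; exact: subsetUl.
      by rewrite (eqP hW) inE.
    have yO : y \in outN e (S i) (x i).
      move: yW; rewrite inE in_setU => /andP[/orP[h|h] _] //; by rewrite h in yn.
    rewrite (Hnew y yO) (negbTE xn).
    move: wS; rewrite in_setU => /orP[wS|wO].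
    * exact: leq_trans (maxge wS) (leqnSn _).
    * by rewrite (Hnew w wO) (negbTE xn).
  + have xW := x_W2 Hi' hW.
    have xS : x i \in S i by move: xW; rewrite inE => /andP[].
    have bound : r w <= r (x i).
      move: wS; rewrite in_setU => /orP[wS|wO].
      * exact: IHi xW wS.
      * by rewrite (Hnew w wO) xW.
    apply: leq_trans bound _.
    move: (yW); rewrite inE in_setU => /andP[/orP[yS|yO] _].
    * apply: IHi xS. apply: W2_mono yS yW; exact: subsetUl.
    * by rewrite (Hnew y yO) xW.
Qed.

Lemma joined_le j u w : j < size us -> u \in outN e (S j) (x j) -> w \in S j.+1 -> r w <= r u.
Proof.
move=> Hj uO wS.
have Hnew := (proj2 hr) j Hj.
have IHi := inv_all (ltnW Hj).
move: wS; rewrite stateS Hj /expand in_setU => /orP[wS|wO].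
- rewrite (Hnew u uO); case: ifP => xW.
  + exact: IHi xW wS.
  + exact: leq_trans (maxge wS) (leqnSn _).
- by rewrite (Hnew u uO) (Hnew w wO).
Qed.

Lemma join v : v != a -> exists i, [/\ i < size us, v \in outN e (S i) (x i) & v \notin S i].
Proof.
move=> va.
have ex : exists k, v \in S k by exists (size us); rewrite (proj2 exec) inE.
case: (ex_minnP ex) => k vk kmin.
case: k vk kmin => [|i] vk kmin.
  by move: vk; rewrite state0 inE (negbTE va).
have vn : v \notin S i by apply/negP => h; move: (kmin i h); rewrite ltnn.
have Hi : i < size us.
  by move: vk; rewrite stateS; case: ifP => // _ h; rewrite h in vn.
exists i; split => //.
move: vk; rewrite stateS Hi /expand in_setU => /orP[h|//].
by rewrite h in vn.
Qed.

Lemma higher u w : r u < r w ->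
  exists i, [/\ i < size us, w \in outN e (S i) (x i), w \notin S i & u \in S i].
Proof.
case: (eqVneq u a) => [->|ua] l.
- have wa : w != a by apply/eqP => wa; move: l; rewrite wa ltnn.
  case: (join wa) => i [Hi wO wn]; exists i; split => //; exact: a_in.
- case: (join ua) => j [Hj uO un].
  have wn : w \notin S j.+1.
    by apply/negP => h; move: (joined_le Hj uO h); rewrite leqNgt l.
  have wa : w != a by apply/eqP => wa; rewrite wa a_in in wn.
  case: (join wa) => i [Hi wO wn']; exists i; split => //.
  have ji : j < i.
    rewrite ltnNge; apply/negP => ij.
    have : w \in S i.+1.
      by rewrite stateS Hi /expand in_setU wO orbT.
    move=> h; have := subsetP (state_mono (ij : i < j.+1)) _ h; by rewrite (negbTE wn).
  apply: (subsetP (state_mono ji)).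
  by rewrite stateS Hj /expand in_setU uO orbT.
Qed.

Lemma key u v1 v2 i1 i2 : e u v1 -> e u v2 -> r u < r v1 -> v1 != v2 ->
  i1 < size us -> v1 \in outN e (S i1) (x i1) -> v1 \notin S i1 -> u \in S i1 ->
  v2 \notin S i2 -> i1 <= i2 -> False.
Proof.
move=> e1 e2 l neq Hi1 v1O v1n uS v2n le.
have v2n' : v2 \notin S i1.
  by apply/negP => /(subsetP (state_mono le)); rewrite (negbTE v2n).
have uW : u \in W2 e (S i1).
  rewrite inE uS /=.
  have sub : [set v1; v2] \subset outN e (S i1) u.
    by apply/subsetP => z; rewrite !inE => /orP[]/eqP->; rewrite ?e1 ?e2 ?v1n ?v2n'.
  by move: (subset_leq_card sub); rewrite cards2 neq.
have hW : W2 e (S i1) != set0 by apply/set0Pn; exists u.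
have xW := x_W2 Hi1 hW.
have xS : x i1 \in S i1 by move: xW; rewrite inE => /andP[].
have := (proj2 hr) i1 Hi1 v1 v1O; rewrite xW => rv1.
move: (inv_all (ltnW Hi1) uW xS); rewrite -rv1 leqNgt l //.
Qed.

End Pf.


Theorem lemma2 (T : finType) (e : rel T) (a : T)
  (e_sym : symmetric e) (e_irr : irreflexive e)
  (e_conn : forall x y : T, connect e x y)
  (deg_a : 2 <= #|[set v | e a v]|)
  (us : seq T) (exec : execution e a us)
  (r : T -> nat) (hr : is_rank e a us r) :
  forall u v1 v2 : T, e u v1 -> e u v2 -> r u < r v1 -> r u < r v2 -> v1 = v2.
Proof.
move=> u v1 v2 e1 e2 l1 l2.
apply/eqP; apply: contraT => neq.
case: (higher exec hr l1) => i1 [H1 O1 n1 u1].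
case: (higher exec hr l2) => i2 [H2 O2 n2 u2].
case: (leqP i1 i2) => le.
- case: (key exec hr e1 e2 l1 neq H1 O1 n1 u1 n2 le).
- rewrite eq_sym in neq.
  case: (key exec hr e2 e1 l2 neq H2 O2 n2 u2 n1 (ltnW le)).
Qed.
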